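(* Let $\mathcal{G}\in\Gamma_N$ with eigenvalues $1,\lambda_2,\dots,\lambda_N$ of $\mathcal{D}$ ($|\lambda_i|<1$ for $i\ge2$), and let $h_1,\dots,h_N\in\mathbf{R}^n$ be a formation. If $A+BK$ and $A+(1-\lambda_i)LC$, $i=2,\dots,N$, are Schur stable and $(A-I)(h_i-h_j)=0$ for all $i,j$, then under the formation protocol, for every initial condition, $\|x_i(k)-h_i-x_j(k)+h_j\|\to0$ as $k\to\infty$ for all $i,j=1,\dots,N$.
   Context: Agents: $x_i(k+1)=Ax_i(k)+Bu_i(k)$, $y_i=Cx_i$, $i=1,\dots,N$, with $A\in\mathbf{R}^{n\times n}$, $B\in\mathbf{R}^{n\times p}$, $C\in\mathbf{R}^{q\times n}$. For a directed graph $\mathcal{G}$ on $\{1,\dots,N\}$, its row-stochastic matrix $\mathcal{D}=(d_{ij})$ has $d_{ii}>0$, $d_{ij}>0$ ($j\ne i$) iff $(j,i)$ is an edge, $0$ otherwise, row sums $1$; $\Gamma_N$ is the set of such graphs containing a directed spanning tree. Formation protocol with $K\in\mathbf{R}^{p\times n}$, $L\in\mathbf{R}^{n\times q}$: $\tilde\zeta_i=\sum_jd_{ij}\big(y_i-y_j-C(h_i-h_j)\big)$, $v_i(k+1)=(A+BK)v_i+L\big(\sum_jd_{ij}C(v_i-v_j)-\tilde\zeta_i\big)$, $u_i=Kv_i$, $v_i\in\mathbf{R}^n$. Schur stable: all eigenvalues of modulus $<1$. *)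

(* Defs.v *)
(* The ambient field is an arbitrary Archimedean algebraically
   closed numeric field [F] (e.g. the complex numbers); "real" objects are
   those with all entries in [Num.real]. *)
From HB Require Import structures.
From mathcomp Require Import all_boot all_order all_algebra.
Set Implicit Arguments. Unset Strict Implicit. Unset Printing Implicit Defensive.
Import Order.TTheory GRing.Theory Num.Theory.
Local Open Scope ring_scope.

Definition real_mx (F : numClosedFieldType) m n (M : 'M[F]_(m, n)) : Prop :=
  forall i j, M i j \is Num.real.

Definition schur_stable (F : numClosedFieldType) n (M : 'M[F]_n) : Prop :=
  forall lam : F, eigenvalue M lam -> `|lam| < 1.

Definition vnorm (F : numClosedFieldType) n (v : 'cV[F]_n) : F :=
  sqrtC (\sum_(i < n) `|v i 0| ^+ 2).

Definition tends_to_0 (F : numClosedFieldType) (u : nat -> F) : Prop :=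
  forall eps : F, 0 < eps -> exists K : nat, forall k : nat, (K <= k)%N -> `|u k| < eps.

(* D is the row-stochastic matrix of a directed graph on {1..N}:
   d_ii > 0, d_ij >= 0 (d_ij > 0 iff (j,i) is an edge), row sums 1, real entries *)
Definition row_stochastic_graph_mx (F : numClosedFieldType) N (D : 'M[F]_N) : Prop :=
  real_mx D /\ (forall i, 0 < D i i) /\ (forall i j, 0 <= D i j)
  /\ (forall i, \sum_(j < N) D i j = 1).

Definition graph_edge (F : numClosedFieldType) N (D : 'M[F]_N) : rel 'I_N :=
  fun j i => (j != i) && (0 < D i j).

Definition has_spanning_tree (F : numClosedFieldType) N (D : 'M[F]_N) : Prop :=
  exists r : 'I_N, forall i : 'I_N, connect (graph_edge D) r i.

Definition in_Gamma (F : numClosedFieldType) N (D : 'M[F]_N) : Prop :=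
  row_stochastic_graph_mx D /\ has_spanning_tree D.

(* Main.v *)
Require Import Defs.
From HB Require Import structures.
From mathcomp Require Import all_boot all_order all_algebra ring.
Import Order.TTheory GRing.Theory Num.Theory.
Local Open Scope ring_scope.
Set Implicit Arguments. Unset Strict Implicit. Unset Printing Implicit Defensive.

Section Scal.
Variable F : archiClosedFieldType.
Implicit Types (u w : nat -> F).

Lemma eqle (x y : F) : x = y -> x <= y. Proof. by move=> ->. Qed.

Lemma t0_ext u w : (forall k, u k = w k) -> tends_to_0 u -> tends_to_0 w.
Proof. by move=> e h eps /h[K hK]; exists K => k /hK; rewrite e. Qed.

Lemma t0_le u w : (forall k, `|u k| <= `|w k|) -> tends_to_0 w -> tends_to_0 u.
Proof.
move=> e h eps /h[K hK]; exists K => k /hK; exact: le_lt_trans.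
Qed.

Lemma t0_0 : tends_to_0 (fun _ => 0 : F).
Proof. by move=> eps e; exists 0%N => k _; rewrite normr0. Qed.

Lemma t0_add u w : tends_to_0 u -> tends_to_0 w -> tends_to_0 (fun k => u k + w k).
Proof.
move=> hu hw eps e; have e2 : 0 < eps / 2 by rewrite divr_gt0.
have [K1 h1] := hu _ e2; have [K2 h2] := hw _ e2.
exists (maxn K1 K2) => k; rewrite geq_max => /andP[k1 k2].
apply: (le_lt_trans (ler_normD _ _)).
by rewrite [eps](splitr eps) ltrD ?h1 ?h2.
Qed.

Lemma t0_scale (c : F) u : tends_to_0 u -> tends_to_0 (fun k => c * u k).
Proof.
move=> hu eps e; have [->|c0] := eqVneq c 0.
  by exists 0%N => k _; rewrite mul0r normr0.
have ce : 0 < eps / `|c| by rewrite divr_gt0 ?normr_gt0.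
have [K hK] := hu _ ce; exists K => k /hK hk.
by rewrite normrM mulrC -ltr_pdivlMr ?normr_gt0.
Qed.

Lemma t0_sum (I : Type) (s : seq I) (G : I -> nat -> F) :
  (forall i, tends_to_0 (G i)) -> tends_to_0 (fun k => \sum_(i <- s) G i k).
Proof.
move=> hG; elim: s => [|a s IH].
  by apply: t0_ext t0_0 => k; rewrite big_nil.
by apply: t0_ext (t0_add (hG a) IH) => k; rewrite big_cons.
Qed.

Lemma bernoulli (t : F) (j : nat) : 0 <= t -> 1 + j%:R * t <= (1 + t) ^+ j.
Proof.
move=> t0; elim: j => [|j IH]; first by rewrite mul0r addr0 expr0.
rewrite exprSr; apply: le_trans (_ : (1 + j%:R * t) * (1 + t) <= _); last first.
  by rewrite ler_wpM2r // addr_ge0.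
rewrite mulrDl mul1r mulrDr mulr1 -natr1 mulrDl mul1r.
have -> : 1 + t + (j%:R * t + j%:R * t * t) = 1 + (j%:R * t + t) + j%:R * t * t by ring.
by rewrite lerDl !mulr_ge0.
Qed.

Lemma geom_small (rho d : F) : 0 <= rho -> rho < 1 -> 0 < d -> exists J, rho ^+ J < d.
Proof.
move=> r0 r1 d0; have [->|rn0] := eqVneq rho 0.
  by exists 1%N; rewrite expr1.
have rp : 0 < rho by rewrite lt_def rn0.
pose t := rho^-1 - 1.
have tp : 0 < t by rewrite /t subr_gt0 invf_gt1.
have x0 : 0 <= (d * t)^-1 by rewrite invr_ge0 ltW // mulr_gt0.
set J := Num.Def.archi_bound (d * t)^-1.
have hJ := archi_boundP x0; exists J.
have Jp : 0 < J%:R * t.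
  by apply: mulr_gt0 => //; apply: le_lt_trans hJ.
have e1 : rho = (1 + t)^-1 by rewrite /t addrC subrK invrK.
have t1 : 0 < 1 + t by rewrite addr_gt0.
rewrite e1 exprVn.
apply: (@le_lt_trans _ _ (J%:R * t)^-1).
  rewrite lef_pV2 ?posrE ?exprn_gt0 //.
  by apply: le_trans (bernoulli J (ltW tp)); rewrite lerDr.
have dt : 0 < d * t by rewrite mulr_gt0.
rewrite -[X in _ < X]invrK ltf_pV2 ?posrE ?invr_gt0 //.
by rewrite -ltr_pdivrMr // -invfM; exact: hJ.
Qed.

Lemma t0_contract (a b : nat -> F) (rho : F) :
  (forall k, 0 <= a k) -> (forall k, 0 <= b k) -> 0 <= rho -> rho < 1 ->
  (forall k, a k.+1 <= rho * a k + b k) -> tends_to_0 b -> tends_to_0 a.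
Proof.
move=> a0 b0 r0 r1 rec hb eps e.
have dp : 0 < eps * (1 - rho) / 2 by rewrite !mulr_gt0 ?subr_gt0 ?invr_gt0.
have [K0 hK0] := hb _ dp.
have claim : forall j, a (K0 + j)%N <= rho ^+ j * a K0 + eps / 2.
  elim=> [|j IH]; first by rewrite addn0 expr0 mul1r lerDl divr_ge0 ?ltW.
  rewrite addnS; apply: le_trans (rec _) _.
  have hb' : b (K0 + j)%N <= eps * (1 - rho) / 2.
    by apply: le_trans (ltW (hK0 _ (leq_addr _ _))); rewrite ger0_norm.
  apply: le_trans (_ : rho * (rho ^+ j * a K0 + eps / 2) + eps * (1 - rho) / 2 <= _).
    by apply: lerD => //; rewrite ler_wpM2l.
  by apply: eqle; rewrite exprS; ring.
have ap : 0 < eps / 2 / (a K0 + 1) by rewrite !divr_gt0 // ltr_wpDl.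
have [J hJ] := geom_small r0 r1 ap.
exists (K0 + J)%N => k kK.
have -> : k = (K0 + (k - K0))%N by rewrite subnKC // (leq_trans (leq_addr _ _) kK).
rewrite ger0_norm //; apply: le_lt_trans (claim _) _.
rewrite [X in _ < X](splitr eps) ltrD2r.
have hJk : rho ^+ (k - K0) <= rho ^+ J.
  by apply: ler_wiXn2l => //; [exact: ltW | rewrite leq_subRL ?(leq_trans (leq_addr _ _) kK)].
apply: (le_lt_trans (_ : _ <= rho ^+ J * (a K0 + 1))).
  by apply: ler_pM => //; [rewrite exprn_ge0 | rewrite lerDl].
by rewrite -ltr_pdivlMr // ltr_wpDl.
Qed.

End Scal.

Section Mx.
Variable F : archiClosedFieldType.
Lemma eqle2 (x y : F) : x = y -> x <= y. Proof. by move=> ->. Qed.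

Lemma trig_diag_eig n (M P : 'M[F]_n) : P \in unitmx ->
  is_trig_mx (P *m M *m invmx P) -> forall j, eigenvalue M ((P *m M *m invmx P) j j).
Proof.
move=> Pu Tt j; set T := P *m M *m invmx P.
have : eigenvalue T (T j j).
  rewrite eigenvalue_root_char char_poly_trig // /root horner_prod.
  by rewrite (bigD1 j) //= hornerXsubC subrr mul0r.
case/eigenvalueP => w wT w0; apply/eigenvalueP; exists (w *m P).
  by rewrite -mulmxA -[P *m M](mulmxKV Pu) -/T mulmxA wT scalemxAl.
apply: contra w0 => /eqP wP; apply/eqP.
by rewrite -(mulmxK Pu w) wP mul0mx.
Qed.


Definition nrm1 n (y : 'cV[F]_n) : F := \sum_i `|y i 0|.

Lemma nrm1_ge0 n (y : 'cV[F]_n) : 0 <= nrm1 y.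
Proof. by apply: sumr_ge0 => i _. Qed.

Lemma nrm1D n (y z : 'cV[F]_n) : nrm1 (y + z) <= nrm1 y + nrm1 z.
Proof.
rewrite /nrm1 -big_split /=; apply: ler_sum => i _; rewrite mxE; exact: ler_normD.
Qed.

Lemma colsum_bound n (T : 'M[F]_n) (rho : F) :
  (forall j, \sum_i `|T i j| <= rho) -> forall z : 'cV_n, nrm1 (T *m z) <= rho * nrm1 z.
Proof.
move=> hc z; rewrite /nrm1.
apply: le_trans (_ : \sum_i \sum_j `|T i j| * `|z j 0| <= _).
  apply: ler_sum => i _; rewrite mxE; apply: le_trans (ler_norm_sum _ _ _) _.
  by apply: ler_sum => j _; rewrite normrM.
rewrite exchange_big mulr_sumr; apply: ler_sum => j _.
by rewrite -mulr_suml ler_wpM2r.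
Qed.


Lemma contraction n (M : 'M[F]_n) : schur_stable M ->
  exists S : 'M[F]_n, exists rho : F, [/\ S \in unitmx, 0 <= rho, rho < 1 &
    forall y : 'cV_n, nrm1 (S *m (M *m y)) <= rho * nrm1 (S *m y)].
Proof.
case: n M => [|n] M hM.
  exists 1%:M, 0; split => //; first by rewrite unitmx1.
  by move=> y; rewrite /nrm1 !big_ord0 mul0r.
have [P Pu Ptrig] := Schur M (ltn0Sn n).
have Pi : P \in unitmx by exact: unitarymx_unit.
move: Ptrig; rewrite /similar_to /conjmx pinvmxE // => Tt.
set T := P *m M *m invmx P in Tt.
have TP : T *m P = P *m M by rewrite /T mulmxKV.
have Tlt : forall j, `|T j j| < 1 by move=> j; apply: hM; exact: trig_diag_eig.
have Tz : forall i j : 'I_n.+1, (i < j)%N -> T i j = 0 by apply/is_trig_mxP.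
pose pi := \prod_i (1 - `|T i i|).
have pi0 : 0 < pi by apply: prodr_gt0 => i _; rewrite subr_gt0.
have pi1 : pi <= 1.
  by rewrite /pi; apply: prodr_ile1 => i _; rewrite subr_ge0 ltW //= gerBl.
have piT : forall j, pi <= 1 - `|T j j|.
  move=> j; rewrite /pi (bigD1 j) //=.
  rewrite -[X in _ <= X]mulr1 ler_pM2l ?subr_gt0 //.
  by apply: prodr_ile1 => i _; rewrite subr_ge0 ltW //= gerBl.
pose s := \sum_j \sum_i `|T i j|.
have s0 : 0 <= s by apply: sumr_ge0 => j _; apply: sumr_ge0.
pose e := pi / (2 * (1 + s)).
have e0 : 0 < e by rewrite divr_gt0 // mulr_gt0 // ltr_wpDr.
have e1 : e <= 1.
  rewrite ler_pdivrMr ?mulr_gt0 ?ltr_wpDr // mul1r.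
  apply: le_trans pi1 _.
  by rewrite mulrDr mulr1 ler_wpDr ?mulr_ge0 // ler1n.
have es : e * s <= pi / 2.
  rewrite /e mulrAC ler_pdivrMr ?mulr_gt0 ?ltr_wpDr // -mulrA ler_pM2l //.
  by rewrite mulrA mulVf ?pnatr_eq0 // mul1r lerDr.
have en0 : e != 0 by rewrite gt_eqF.
pose G : 'M[F]_n.+1 := diag_mx (\row_i (e ^+ i)).
pose Gi : 'M[F]_n.+1 := diag_mx (\row_i (e^-1 ^+ i)).
have GGi : Gi *m G = 1%:M.
  apply/matrixP => i j; rewrite mul_diag_mx !mxE.
  case: eqP => [->|_]; last by rewrite !mulr0n mulr0.
  by rewrite !mulr1n -exprMn mulVf // expr1n.
have Gu : G \in unitmx.
  by case/mulmx1_unit: GGi.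
pose S := G *m P; pose T' := G *m T *m Gi.
exists S, (1 - pi / 2); split.
- by rewrite unitmx_mul Gu Pi.
- rewrite subr_ge0 ler_pdivrMr // mul1r; apply: le_trans pi1 _; rewrite ler1n //.
- by rewrite gtrBl divr_gt0.
move=> y.
have -> : S *m (M *m y) = T' *m (S *m y).
  by rewrite /T' /S !mulmxA -(mulmxA _ Gi G) GGi mulmx1 mulmxKV.
apply: colsum_bound => j.
have T'E : forall i, T' i j = e ^+ i * T i j * e^-1 ^+ j.
  by move=> i; rewrite /T' mul_mx_diag mul_diag_mx !mxE.
rewrite (bigD1 j) //= T'E mulrAC -exprMn mulfV // expr1n mul1r.
apply: le_trans (_ : `|T j j| + e * s <= _); last first.
  apply: le_trans (_ : 1 - pi + pi / 2 <= _); first by rewrite lerD // lerBrDr addrC -lerBrDr.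
  by apply: eqle2; field.
rewrite lerD2l.
apply: le_trans (_ : \sum_(i | i != j) e * `|T i j| <= _).
  apply: ler_sum => i ij; rewrite T'E.
  case: (ltngtP i j) => [lij | gij | /val_inj eij]; last by rewrite eij eqxx in ij.
  - rewrite Tz // mulr0 mul0r normr0; apply: mulr_ge0 => //; exact: ltW.
  - have eij : e ^+ i * e^-1 ^+ j = e ^+ (i - j).
      by rewrite -{1}(subnK (ltnW gij)) exprD -mulrA -exprMn mulfV // expr1n mulr1.
    have e0w : 0 <= e by exact: ltW.
    rewrite mulrAC eij normrM ger0_norm ?exprn_ge0 //.
    apply: ler_wpM2r => //.
    have hp : (0 < i - j)%N by rewrite subn_gt0.
    rewrite -(prednK hp) exprS; apply: ler_piMr; first exact: ltW.
    by apply: exprn_ile1 => //; exact: ltW.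
rewrite -mulr_sumr; apply: ler_wpM2l; first exact: ltW.
apply: le_trans (_ : \sum_i `|T i j| <= _).
  by rewrite [X in _ <= X](bigD1 j) //= lerDr.
rewrite /s [X in _ <= X](bigD1 j) //= lerDl.
by apply: sumr_ge0 => k _; apply: sumr_ge0.
Qed.

End Mx.

Section Cv.
Variable F : archiClosedFieldType.

Definition cvm m n (Z : nat -> 'M[F]_(m, n)) := forall a b, tends_to_0 (fun k => Z k a b).

Lemma cvm_ext m n (Z Y : nat -> 'M[F]_(m, n)) : (forall k, Z k = Y k) -> cvm Z -> cvm Y.
Proof. by move=> e h a b; apply: t0_ext (h a b) => k; rewrite e. Qed.

Lemma cvm_add m n (Z Y : nat -> 'M[F]_(m, n)) : cvm Z -> cvm Y -> cvm (fun k => Z k + Y k).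
Proof. by move=> hz hy a b; apply: t0_ext (t0_add (hz a b) (hy a b)) => k; rewrite mxE. Qed.

Lemma cvm_mull r m n (M : 'M[F]_(r, m)) (Z : nat -> 'M[F]_(m, n)) :
  cvm Z -> cvm (fun k => M *m Z k).
Proof.
move=> hz a b; apply: t0_ext (@t0_sum _ _ (index_enum _) (fun j k => M a j * Z k j b) _).
  by move=> k; rewrite mxE.
by move=> j; apply: t0_scale.
Qed.

Lemma cvm_mulr m n r (Z : nat -> 'M[F]_(m, n)) (M : 'M[F]_(n, r)) :
  cvm Z -> cvm (fun k => Z k *m M).
Proof.
move=> hz a b; apply: t0_ext (@t0_sum _ _ (index_enum _) (fun j k => M j b * Z k a j) _).
  by move=> k; rewrite mxE; apply: eq_bigr => j _; rewrite mulrC.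
by move=> j; apply: t0_scale.
Qed.

Lemma stable_input n (M : 'M[F]_n) (y f : nat -> 'cV[F]_n) : schur_stable M ->
  (forall k, y k.+1 = M *m y k + f k) -> cvm f -> cvm y.
Proof.
move=> hM rec hf.
have [S [rho [Su r0 r1 hc]]] := contraction hM.
pose a k := nrm1 (S *m y k); pose b k := nrm1 (S *m f k).
have ha : tends_to_0 a.
  apply: (@t0_contract _ a b rho) => //.
  - by move=> k; apply: nrm1_ge0.
  - by move=> k; apply: nrm1_ge0.
  - move=> k; rewrite /a rec mulmxDr; apply: le_trans (nrm1D _ _) _.
    by rewrite lerD2r hc.
  - apply: t0_sum => i; apply: (t0_le (w := fun k => (S *m f k) i 0)).
      by move=> k; rewrite normr_id.
    exact: (cvm_mull S hf).
have hSy : cvm (fun k => S *m y k).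
  move=> i j; rewrite (ord1 j); apply: t0_le ha => k.
  rewrite [X in _ <= X]ger0_norm ?nrm1_ge0 // /a /nrm1 (bigD1 i) //= lerDl.
  by apply: sumr_ge0.
by apply: cvm_ext (cvm_mull (invmx S) hSy) => k; rewrite mulKmx.
Qed.

End Cv.

Section Graph.
Variable F : numClosedFieldType.

Lemma pos_root N (D : 'M[F]_N) (r : 'I_N) (p : 'rV[F]_N) :
  (forall i j, 0 <= D i j) -> (forall i, connect (graph_edge D) r i) ->
  (forall i, 0 <= p 0 i) -> p *m D = p -> forall i0, 0 < p 0 i0 -> 0 < p 0 r.
Proof.
move=> D0 hr p0 pD i0 pi0.
have cl : forall j i, graph_edge D j i -> 0 < p 0 i -> 0 < p 0 j.
  move=> j i /andP[_ dij] pi; rewrite lt_def p0 andbT; apply/negP => /eqP pj.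
  have : (p *m D) 0 j = 0 by rewrite pD.
  rewrite mxE => /psumr_eq0P h.
  have /eqP := h (fun k _ => mulr_ge0 (p0 k) (D0 k j)) i isT.
  rewrite mulf_eq0 => /orP[] /eqP e.
    by rewrite e ltxx in pi.
  by rewrite e ltxx in dij.
have /connectP [s sp ei] := hr i0; rewrite ei in pi0; clear ei hr.
elim: s r sp pi0 => [|y s IH] x //= /andP[exy ps] hl.
by apply: (cl x y exy); apply: IH.
Qed.

Lemma exists_pos N (p : 'rV[F]_N) : (forall i, 0 <= p 0 i) -> 0 < \sum_i p 0 i ->
  exists i, 0 < p 0 i.
Proof.
move=> p0 ps; case: (boolP [exists i, 0 < p 0 i]) => [/existsP//|/existsPn h].
have : \sum_i p 0 i = 0 by apply: big1 => i _; apply/eqP; rewrite eq_le p0 andbT real_leNgt ?h ?real0 // ger0_real.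
by move=> e; rewrite e ltxx in ps.
Qed.

Lemma graph_real N (D : 'M[F]_N) : in_Gamma D -> forall w : 'rV[F]_N,
  (forall i, w 0 i \is Num.real) -> w *m D = w -> \sum_i w 0 i = 0 -> w = 0.
Proof.
move=> [[_ [_ [D0 Drow]]] [r hr]] w wr wD ws.
have Dr : forall i j, D i j \is Num.real by move=> i j; apply: ger0_real.
pose u := \row_i `|w 0 i|.
have uD : u *m D = u.
  have le : forall j, u 0 j <= (u *m D) 0 j.
    move=> j; rewrite !mxE; rewrite -{1}wD mxE.
    apply: le_trans (ler_norm_sum _ _ _) _; apply: ler_sum => i _.
    by rewrite normrM (ger0_norm (D0 _ _)) mxE.
  have s0 : \sum_j ((u *m D) 0 j - u 0 j) = 0.
    rewrite sumrB; apply/eqP; rewrite subr_eq0; apply/eqP.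
    under eq_bigr do rewrite mxE.
    rewrite exchange_big /=; apply: eq_bigr => i _.
    by rewrite -mulr_sumr Drow mulr1.
  apply/rowP => j; apply/eqP; rewrite -subr_eq0; apply/eqP.
  have nn : forall k, true -> 0 <= (u *m D) 0 k - u 0 k by move=> k _; rewrite subr_ge0.
  exact: (psumr_eq0P nn s0).
pose pp := u + w; pose qq := u - w.
have ppD : pp *m D = pp by rewrite mulmxDl uD wD.
have qqD : qq *m D = qq by rewrite mulmxBl uD wD.
have pp0 : forall i, 0 <= pp 0 i.
  move=> i; rewrite !mxE -[X in _ + X]opprK subr_ge0 lerNl.
  exact: real_lerNnormlW (wr i) (lexx _).
have qq0 : forall i, 0 <= qq 0 i.
  by move=> i; rewrite !mxE subr_ge0; apply: real_ler_norm.
apply/eqP; apply/negPn/negP => wn0.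
have [i0 wi0] : exists i, w 0 i != 0.
  case: (boolP [exists i, w 0 i != 0]) => [/existsP//|/existsPn h].
  by case/eqP: wn0; apply/rowP => i; rewrite mxE; move: (h i); rewrite negbK => /eqP.
have su : 0 < \sum_i `|w 0 i|.
  rewrite (bigD1 i0) //=; apply: lt_le_trans (_ : `|w 0 i0| <= _).
    by rewrite normr_gt0.
  by rewrite lerDl; apply: sumr_ge0 => i _.
have sp : 0 < \sum_i pp 0 i.
  by under eq_bigr do rewrite !mxE; rewrite big_split /= ws addr0.
have sq : 0 < \sum_i qq 0 i.
  by under eq_bigr do rewrite !mxE; rewrite sumrB ws subr0.
have [ip hip] := exists_pos pp0 sp; have [iq hiq] := exists_pos qq0 sq.
have hp := pos_root D0 hr pp0 ppD hip; have hq := pos_root D0 hr qq0 qqD hiq.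
have := mulr_gt0 hp hq.
have -> : pp 0 r * qq 0 r = 0.
  by rewrite !mxE mulrC -subr_sqr real_normK ?wr // subrr.
by rewrite ltxx.
Qed.

Lemma graph_lemma N (D : 'M[F]_N) : in_Gamma D -> forall w : 'rV[F]_N,
  w *m D = w -> \sum_i w 0 i = 0 -> w = 0.
Proof.
move=> hG w wD ws.
have Dr : forall i j, D i j \is Num.real.
  by case: hG => [[_ [_ [D0 _]]] _] i j; apply: ger0_real.
have hr : w *m D = w by [].
have eR : map_mx (fun z => 'Re z) w = 0.
  apply: (graph_real hG).
  - by move=> i; rewrite mxE Creal_Re.
  - apply/rowP => j; rewrite !mxE -{2}wD mxE raddf_sum; apply: eq_bigr => i _.
    by rewrite mxE; exact: (esym (ReMr (Dr i j) _)).
  - by under eq_bigr do rewrite mxE; rewrite -raddf_sum ws raddf0.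
have eI : map_mx (fun z => 'Im z) w = 0.
  apply: (graph_real hG).
  - by move=> i; rewrite mxE Creal_Im.
  - apply/rowP => j; rewrite !mxE -{2}wD mxE raddf_sum; apply: eq_bigr => i _.
    rewrite mxE [w 0 i * _]mulrC [_ * D i j]mulrC; exact: (esym (ImMl (Dr i j) _)).
  - by under eq_bigr do rewrite mxE; rewrite -raddf_sum ws raddf0.
apply/rowP => i; rewrite [w 0 i]Crect.
move/rowP: eR => /(_ i); move/rowP: eI => /(_ i); rewrite !mxE => -> ->.
by rewrite mulr0 addr0.
Qed.

End Graph.

Section H.
Variable F : archiClosedFieldType.

Lemma eigenvalue_tr n (M : 'M[F]_n) a : eigenvalue M a -> eigenvalue M^T a.
Proof.
rewrite /eigenvalue /eigenspace -!mxrank_eq0 !mxrank_ker.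
have -> : M^T - a%:M = (M - a%:M)^T by rewrite linearB /= tr_scalar_mx.
by rewrite mxrank_tr.
Qed.

Definition mxcols n N (g : 'I_N -> 'cV[F]_n) : 'M[F]_(n, N) := \matrix_(r, i) g i r 0.

Lemma mxcols_mul n N (g : 'I_N -> 'cV[F]_n) (w : 'cV[F]_N) :
  mxcols g *m w = \sum_i w i 0 *: g i.
Proof.
apply/matrixP => r c; rewrite (ord1 c) !mxE summxE; apply: eq_bigr => i _.
by rewrite !mxE mulrC.
Qed.

Lemma mul_mxcols m n N (M : 'M[F]_(m, n)) (g : 'I_N -> 'cV[F]_n) :
  M *m mxcols g = mxcols (fun i => M *m g i).
Proof. by apply/matrixP => r i; rewrite !mxE; apply: eq_bigr => j _; rewrite mxE. Qed.

Lemma mxcolsD n N (g g' : 'I_N -> 'cV[F]_n) :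
  mxcols (fun i => g i + g' i) = mxcols g + mxcols g'.
Proof. by apply/matrixP => r i; rewrite !mxE. Qed.

Lemma mxcolsB n N (g g' : 'I_N -> 'cV[F]_n) :
  mxcols (fun i => g i - g' i) = mxcols g - mxcols g'.
Proof. by apply/matrixP => r i; rewrite !mxE. Qed.

Lemma mxcols_ext n N (g g' : 'I_N -> 'cV[F]_n) :
  (forall i, g i = g' i) -> mxcols g = mxcols g'.
Proof. by move=> e; apply/matrixP => r i; rewrite !mxE e. Qed.

Lemma mxcols_sum n N s (g : 'I_N -> 'cV[F]_n) (Q : 'M[F]_(N, s)) :
  mxcols (fun l => \sum_j Q j l *: g j) = mxcols g *m Q.
Proof.
apply/matrixP => r l; rewrite !mxE summxE; apply: eq_bigr => j _.
by rewrite !mxE mulrC.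
Qed.

Lemma mxcols_const n N s (c : 'cV[F]_n) (W : 'M[F]_(N, s)) :
  (forall l, \sum_i W i l = 0) -> mxcols (fun _ : 'I_N => c) *m W = 0.
Proof.
move=> hW; apply/matrixP => r l; rewrite !mxE.
under eq_bigr do rewrite mxE.
by rewrite -mulr_sumr hW mulr0.
Qed.

Lemma vnorm_le n (z : 'cV[F]_n) : vnorm z <= \sum_r `|z r 0|.
Proof.
set t := \sum_r `|z r 0|.
have t0 : 0 <= t by apply: sumr_ge0.
rewrite /vnorm -(sqrCK t0) ler_sqrtC ?nnegrE ?exprn_ge0 //; last first.
  by apply: sumr_ge0 => r _; rewrite exprn_ge0.
rewrite expr2 mulr_suml; apply: ler_sum => r _.
rewrite expr2 ler_wpM2l //.
by rewrite /t (bigD1 r) //= lerDl; apply: sumr_ge0.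
Qed.

Lemma t0_vnorm n (z : nat -> 'cV[F]_n) : cvm z -> tends_to_0 (fun k => vnorm (z k)).
Proof.
move=> hz; apply: (t0_le (w := fun k => \sum_r `|z k r 0|)).
  move=> k; rewrite ger0_norm ?sqrtC_ge0 ?sumr_ge0 //; last first.
    by move=> r _; rewrite exprn_ge0.
  by rewrite (ger0_norm (sumr_ge0 _ _)) ?vnorm_le.
apply: t0_sum => r; apply: (t0_le (w := fun k => z k r 0)).
  by move=> k; rewrite normr_id.
exact: hz.
Qed.

End H.

Unset Implicit Arguments.

Lemma colM (F : fieldType) m n s (A : 'M[F]_(m, n)) (B : 'M[F]_(n, s)) c :
  col c (A *m B) = A *m col c B.
Proof. by rewrite !colE mulmxA. Qed.

Lemma sum_delta (F : fieldType) n N (g : 'I_N -> 'cV[F]_n) i :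
  \sum_j (j == i)%:R *: g j = g i.
Proof.
rewrite (bigD1 i) //= eqxx scale1r big1 ?addr0 // => j /negbTE ->.
by rewrite scale0r.
Qed.

Theorem theorem5 (F : archiClosedFieldType) (N n p q : nat)
  (A : 'M[F]_n) (B : 'M[F]_(n, p)) (C : 'M[F]_(q, n))
  (K : 'M[F]_(p, n)) (L : 'M[F]_(n, q)) (D : 'M[F]_N)
  (h : 'I_N -> 'cV[F]_n) :
  real_mx A -> real_mx B -> real_mx C -> real_mx K -> real_mx L ->
  (forall i, real_mx (h i)) ->
  in_Gamma D ->
  schur_stable (A + B *m K) ->
  (forall lam : F, eigenvalue D lam -> lam != 1 ->
     schur_stable (A + (1 - lam) *: (L *m C))) ->
  (forall i j, (A - 1%:M) *m (h i - h j) = 0) ->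
  forall (x v : nat -> 'I_N -> 'cV[F]_n) (u : nat -> 'I_N -> 'cV[F]_p),
  (forall i, real_mx (x 0%N i)) -> (forall i, real_mx (v 0%N i)) ->
  (forall k i, u k i = K *m v k i) ->
  (forall k i, x k.+1 i = A *m x k i + B *m u k i) ->
  (forall k i, v k.+1 i =
     (A + B *m K) *m v k i
     + L *m (\sum_(j < N) D i j *: (C *m (v k i - v k j))
             - \sum_(j < N) D i j *: (C *m x k i - C *m x k j - C *m (h i - h j)))) ->
  forall i j, tends_to_0 (fun k => vnorm (x k i - h i - x k j + h j)).
Proof.
move=> _ _ _ _ _ _ hG hBK hLC hh x v u _ _ hu hx hv.
case: N D h hG hLC hh x v u hu hx hv => [|m] D h hG hLC hh x v u hu hx hv; first by case.
pose xt k i := x k i - h i.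
pose e k i := v k i - xt k i.
pose c := (A - 1%:M) *m h ord0.
have hc : forall i, (A - 1%:M) *m h i = c.
  by move=> i; apply/eqP; rewrite -subr_eq0 -mulmxBr hh.
have Drow : forall i, \sum_j D i j = 1 by case: hG => [[_ [_ [_ ?]]] _].
pose Lt : 'M[F]_m.+1 := 1%:M - D^T.
have LtE : forall j i, Lt j i = (j == i)%:R - D i j by move=> j i; rewrite !mxE.
have sumdiff : forall (g : 'I_m.+1 -> 'cV[F]_n) i,
    \sum_j D i j *: (g i - g j) = \sum_j Lt j i *: g j.
  move=> g i; under [RHS]eq_bigr do rewrite LtE scalerBl.
  rewrite sumrB sum_delta; under eq_bigr do rewrite scalerBr.
  by rewrite sumrB -scaler_suml Drow scale1r.
have he : forall k i, e k.+1 i = A *m e k i + L *m C *m (\sum_j Lt j i *: e k j) - c.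
  move=> k i; rewrite -sumdiff.
  have hS : \sum_j D i j *: (C *m (v k i - v k j))
      - \sum_j D i j *: (C *m x k i - C *m x k j - C *m (h i - h j))
      = C *m \sum_j D i j *: (e k i - e k j).
    rewrite -sumrB mulmx_sumr; apply: eq_bigr => j _; rewrite -scalerBr -scalemxAr.
    congr (_ *: _); rewrite /e /xt !mulmxBr.
    move: (C *m v k i) (C *m v k j) (C *m x k i) (C *m x k j) (C *m h i) (C *m h j).
    by move=> a1 a2 a3 a4 a5 a6; apply/matrixP => r s; rewrite !mxE; ring.
  move: hS; set S := \sum_j D i j *: (e k i - e k j) => hS.
  rewrite /e /xt hv hx hu hS -(hc i).
  rewrite ?mulmxDl ?mulmxBr ?mulmxBl ?mulmxDr ?mulmxA ?mul1mx ?mulNmx ?mul1mx.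
  move: (A *m v k i) (B *m K *m v k i) (L *m C *m S).
  move: (A *m x k i) (A *m h i) (h i) => a1 a2 a3 a4 a5 a6.
  by apply/matrixP => r s; rewrite !mxE; ring.
have hxt : forall k i, xt k.+1 i = (A + B *m K) *m xt k i + (B *m K) *m e k i + c.
  move=> k i; rewrite /e /xt hx hu -(hc i).
  rewrite ?mulmxDl ?mulmxBr ?mulmxBl ?mulmxDr ?mulmxA ?mul1mx ?mulNmx ?mul1mx.
  move: (A *m x k i) (A *m h i) (B *m K *m x k i) (B *m K *m h i) (B *m K *m v k i) (h i).
  by move=> a1 a2 a3 a4 a5 a6; apply/matrixP => r s; rewrite !mxE; ring.
pose W : 'M[F]_(m.+1, m) :=
  \matrix_(i, l) ((i == lift ord_max l)%:R - (i == ord_max)%:R).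
have sum1 : forall a : 'I_m.+1, \sum_i (i == a)%:R = 1 :> F.
  move=> a; rewrite (bigD1 a) //= eqxx big1 ?addr0 // => i /negbTE ->.
  by [].
have Wsum : forall l, \sum_i W i l = 0.
  by move=> l; under eq_bigr do rewrite mxE; rewrite sumrB !sum1 subrr.
have Wlift : forall (b : 'cV[F]_m) l, (W *m b) (lift ord_max l) 0 = b l 0.
  move=> b l; rewrite mxE.
  under eq_bigr do rewrite mxE (inj_eq lift_inj).
  rewrite [lift _ _ == _]eq_sym (negbTE (neq_lift _ _)).
  under eq_bigr do rewrite subr0.
  rewrite (bigD1 l) //= eqxx mul1r big1 ?addr0 // => l' /negbTE.
  by rewrite eq_sym => ->; rewrite mul0r.
have Wtop : forall w : 'cV[F]_m.+1, \sum_i w i 0 = 0 ->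
    W *m (\col_l w (lift ord_max l) 0) = w.
  move=> w ws; apply/matrixP => i z; rewrite (ord1 z).
  case: (unliftP ord_max i) => [j ->|->]; first by rewrite Wlift mxE.
  rewrite mxE; under eq_bigr do rewrite !mxE (negbTE (neq_lift _ _)) eqxx sub0r mulN1r.
  rewrite sumrN; move: ws; rewrite (bigD1_ord ord_max) //= => /eqP.
  by rewrite addr_eq0 => /eqP ->.
pose J : 'M[F]_m := \matrix_(l', l) (Lt *m W) (lift ord_max l') l.
have LtWsum : forall l, \sum_i (Lt *m W) i l = 0.
  move=> l; under eq_bigr do rewrite mxE; rewrite exchange_big /=.
  apply: big1 => j _; rewrite -mulr_suml.
  under eq_bigr do rewrite LtE; by rewrite sumrB sum1 Drow subrr mul0r.
have LtW : Lt *m W = W *m J.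
  apply/matrixP => i l.
  have := Wtop (col l (Lt *m W)).
  rewrite (_ : \sum_i0 col l (Lt *m W) i0 0 = 0); last first.
    by under eq_bigr do rewrite mxE; exact: LtWsum.
  move=> /(_ erefl) /matrixP /(_ i 0); rewrite !mxE => <-.
  by apply: eq_bigr => l' _; rewrite !mxE.
have hJ : forall mu, eigenvalue J mu -> schur_stable (A + mu *: (L *m C)).
  move=> mu /eigenvalue_tr /eigenvalueP [a aJ a0].
  pose w := W *m a^T.
  have Jw : J *m a^T = mu *: a^T by rewrite -[J]trmxK -trmx_mul aJ linearZ.
  have Ltw : Lt *m w = mu *: w by rewrite /w mulmxA LtW -mulmxA Jw scalemxAr.
  have w0 : w != 0.
    apply: contra a0 => /eqP w0; apply/eqP/rowP => l.
    by move: (Wlift a^T l); rewrite -/w w0 !mxE => <-.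
  have DT : D^T = 1%:M - Lt by rewrite /Lt subKr.
  have wD : w^T *m D = (1 - mu) *: w^T.
    have hw : D^T *m w = (1 - mu) *: w by rewrite DT mulmxBl mul1mx Ltw scalerBl scale1r.
    by rewrite -[D]trmxK -trmx_mul hw linearZ.
  have eD : eigenvalue D (1 - mu).
    by apply/eigenvalueP; exists w^T => //; rewrite trmx_eq0.
  have mu1 : 1 - mu != 1.
    apply: contra w0 => /eqP e1.
    have mu00 : mu = 0.
      have eq1 : mu = 1 - (1 - mu) by rewrite subKr.
      by rewrite eq1 e1 subrr.
    rewrite -trmx_eq0; apply/eqP; apply: (graph_lemma hG).
      by rewrite wD mu00 subr0 scale1r.
    rewrite /w; under eq_bigr do rewrite !mxE.
    rewrite exchange_big /=; apply: big1 => l _.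
    under eq_bigr do rewrite mxE.
    by rewrite -mulr_suml sumrB !sum1 subrr mul0r.
  by have := hLC _ eD mu1; rewrite subKr.
pose Em k := mxcols (e k). pose Xm k := mxcols (xt k).
pose Z k := Em k *m W. pose XW k := Xm k *m W.
have hEm : forall k, Em k.+1 =
    A *m Em k + L *m C *m (Em k *m Lt) - mxcols (fun _ : 'I_m.+1 => c).
  by move=> k; rewrite /Em (mxcols_ext (he k)) mxcolsB mxcolsD -!mul_mxcols mxcols_sum.
have hZ : forall k, Z k.+1 = A *m Z k + L *m C *m Z k *m J.
  by move=> k; rewrite /Z hEm mulmxBl mxcols_const // subr0 mulmxDl -!mulmxA LtW.
have hXm : forall k, Xm k.+1 =
    (A + B *m K) *m Xm k + (B *m K) *m Em k + mxcols (fun _ : 'I_m.+1 => c).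
  by move=> k; rewrite /Xm /Em (mxcols_ext (hxt k)) [in LHS]mxcolsD [in LHS]mxcolsD -!mul_mxcols.
have hXW : forall k, XW k.+1 = (A + B *m K) *m XW k + (B *m K) *m Z k.
  by move=> k; rewrite /XW hXm !mulmxDl mxcols_const // addr0 -!mulmxA.
have mxcols_col : forall s (M : 'M[F]_(n, s)), mxcols (fun l => col l M) = M.
  by move=> s M; apply/matrixP => a b; rewrite !mxE.
have cvm_col : forall s (Y : nat -> 'M[F]_(n, s)),
    (forall c0, cvm (fun k => col c0 (Y k))) -> cvm Y.
  move=> s Y hY a b; apply: t0_ext (hY b a 0) => k; by rewrite mxE.
have col_cvm : forall s (Y : nat -> 'M[F]_(n, s)) c0, cvm Y -> cvm (fun k => col c0 (Y k)).
  move=> s Y c0 hY a b; apply: t0_ext (hY a c0) => k; by rewrite mxE.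
have cZ : cvm Z.
  have [m0|mpos] := posnP m.
    by move=> a b; have := ltn_ord b; rewrite {2}m0.
  have [P Pu] := Schur J mpos.
  have Pi : P \in unitmx by exact: unitarymx_unit.
  rewrite /similar_to /conjmx pinvmxE // => hT.
  set T := P *m J *m invmx P in hT.
  have JPi : J *m invmx P = invmx P *m T by rewrite /T -!mulmxA mulKmx.
  pose Y k := Z k *m invmx P.
  have hY : forall k, Y k.+1 = A *m Y k + L *m C *m Y k *m T.
    by move=> k; rewrite /Y hZ mulmxDl -!mulmxA JPi.
  have Tz : forall i j : 'I_m, (i < j)%N -> T i j = 0 by apply/is_trig_mxP.
  have rec : forall (c0 : 'I_m) k, col c0 (Y k.+1) =
      (A + T c0 c0 *: (L *m C)) *m col c0 (Y k)
      + L *m C *m \sum_(l : 'I_m | (c0 < l)%N) T l c0 *: col l (Y k).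
    move=> c0 k; rewrite hY linearD /= (@colM _ _ _ _ A (Y k) c0).
    rewrite (@colM _ _ _ _ (L *m C *m Y k) T c0).
    have YT : Y k *m col c0 T = \sum_l T l c0 *: col l (Y k).
      rewrite -{1}(mxcols_col _ (Y k)) mxcols_mul.
      by apply: eq_bigr => l _; rewrite mxE.
    rewrite -(mulmxA (L *m C)) YT (bigD1 c0) //=.
    rewrite (_ : \sum_(l : 'I_m | l != c0) T l c0 *: col l (Y k) =
                 \sum_(l : 'I_m | (c0 < l)%N) T l c0 *: col l (Y k)); last first.
      rewrite big_mkcond [RHS]big_mkcond; apply: eq_bigr => l _ /=.
      rewrite -val_eqE /=.
      case: (ltngtP c0 l) => [lt | gt | eq].
      - by [].
      - by rewrite /= Tz // scale0r.
      - by [].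
    by rewrite mulmxDl mulmxDr -scalemxAl -scalemxAr addrA.
  have cY : forall d (c0 : 'I_m), (m - c0 <= d)%N -> cvm (fun k => col c0 (Y k)).
    elim=> [|d IH] c0 hd.
      by move: hd; rewrite leqn0 subn_eq0 leqNgt ltn_ord.
    have hst := hJ _ (trig_diag_eig Pi hT c0).
    apply: (stable_input (f := fun k => L *m C *m
      \sum_(l : 'I_m | (c0 < l)%N) T l c0 *: col l (Y k)) hst (rec c0)).
    apply: cvm_mull.
    move=> a b; apply: (@t0_ext _ (fun k => \sum_(l : 'I_m)
        (if (c0 < l)%N then T l c0 * col l (Y k) a b else 0))).
      move=> k; rewrite summxE [RHS]big_mkcond; apply: eq_bigr => l _.
      case: ifP => _; last by [].
      by rewrite [in RHS]mxE.
    have H := @t0_sum _ _ (index_enum 'I_m) (fun l k =>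
      if (c0 < l)%N then T l c0 * col l (Y k) a b else 0).
    apply: H => l. case: (boolP (c0 < l)%N) => lt; last exact: t0_0.
    apply: t0_scale; apply: IH.
    by rewrite -ltnS; apply: leq_trans hd; apply: ltn_sub2l.
  have cYY : cvm Y by apply: cvm_col => c0; apply: (cY m); exact: leq_subr.
  by apply: cvm_ext (cvm_mulr P cYY) => k; rewrite /Y mulmxKV.
have cXW : cvm XW.
  apply: cvm_col => c0; apply: (stable_input hBK (f := fun k => B *m K *m col c0 (Z k))).
    by move=> k; rewrite hXW linearD /= !colM.
  by apply: cvm_mull; apply: col_cvm.
move=> i j.
pose dl : 'cV[F]_m.+1 := \col_r ((r == i)%:R - (r == j)%:R).
have dls : \sum_r dl r 0 = 0.
  by under eq_bigr do rewrite mxE; rewrite sumrB !sum1 subrr.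
have eq1 : forall k, x k i - h i - x k j + h j =
    XW k *m (\col_l dl (lift ord_max l) 0).
  move=> k; rewrite /XW -mulmxA Wtop // /Xm mxcols_mul.
  under eq_bigr do rewrite mxE scalerBl.
  rewrite sumrB !sum_delta /xt.
  move: (x k i) (h i) (x k j) (h j) => a1 a2 a3 a4.
  by apply/matrixP => r s; rewrite !mxE; ring.
apply: (t0_ext (u := fun k => vnorm (XW k *m (\col_l dl (lift ord_max l) 0)))).
  by move=> k; rewrite eq1.
by apply: t0_vnorm; apply: cvm_mulr.
Qed.
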